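(* Let $G$ be a connected toroidal graph (a finite simple graph embeddable in the torus) that contains no subgraph isomorphic to $C_1$ and no subgraph isomorphic to $C_2$, where $C_1$ and $C_2$ are the graphs described in the context. Then $G$ has minimum degree at most three, unless $G$ is a $2$-connected $4$-regular graph with Euler characteristic $\epsilon(G)=0$.
   Context: $C_1$ (the ''house'') is the graph on vertices $a,b,c,d,h$ with edges $ab,bc,cd,da,ah,hb$; equivalently a $4$-cycle $abcd$ together with a triangle $abh$ sharing the edge $ab$. $C_2$ is the graph on vertices $u_1,\dots,u_5,x,y$ with edges $u_1u_2,u_2u_3,u_3u_4,u_4u_5,u_5u_1$ (a $5$-cycle), $xu_5,xu_1$ and $yu_1,yu_2$; i.e. a $5$-cycle with two triangles attached on the two consecutive edges $u_5u_1$ and $u_1u_2$. ''Subgraph'' means not necessarily induced. For a connected toroidal graph $G$, $\epsilon(G)$ denotes $|V(G)|-|E(G)|+|F(G)|$ for a $2$-cell embedding of $G$ in the plane or the torus, i.e. the Euler characteristic of that surface ($2$ for the plane/sphere, $0$ for the torus); thus $\epsilon(G)=0$ means the $2$-cell embedding is in the torus. *)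

(* Defs.v *)
From mathcomp Require Import all_boot all_order all_fingroup all_algebra.
Set Implicit Arguments. Unset Strict Implicit. Unset Printing Implicit Defensive.

Definition simple_graph (T : finType) (e : rel T) : Prop :=
  symmetric e /\ irreflexive e.

Definition nbhd (T : finType) (e : rel T) (x : T) : {set T} := [set y | e x y].
Definition deg (T : finType) (e : rel T) (x : T) : nat := #|nbhd e x|.

Definition connected_graph (T : finType) (e : rel T) : Prop :=
  forall x y : T, connect e x y.

Definition del_vertex (T : finType) (e : rel T) (v : T) : rel T :=
  [rel a b | [&& e a b, a != v & b != v]].

Definition two_connected (T : finType) (e : rel T) : Prop :=
  2 < #|T| /\
  forall v x y : T, x != v -> y != v -> connect (del_vertex e v) x y.

Definition regular (T : finType) (e : rel T) (k : nat) : Prop :=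
  forall x : T, deg e x = k.

Definition has_subgraph (n : nat) (H : rel 'I_n) (T : finType) (e : rel T) : Prop :=
  exists f : 'I_n -> T, injective f /\ forall i j : 'I_n, H i j -> e (f i) (f j).

Definition rel_of_edges (n : nat) (l : seq (nat * nat)) : rel 'I_n :=
  fun i j => ((nat_of_ord i, nat_of_ord j) \in l) || ((nat_of_ord j, nat_of_ord i) \in l).

(* C1 (house): a=0, b=1, c=2, d=3, h=4; edges ab bc cd da ah hb *)
Definition C1 : rel 'I_5 :=
  rel_of_edges [:: (0,1); (1,2); (2,3); (3,0); (0,4); (4,1)].

(* C2: u1..u5 = 0..4, x = 5, y = 6;
   edges u1u2 u2u3 u3u4 u4u5 u5u1, xu5 xu1, yu1 yu2 *)
Definition C2 : rel 'I_7 :=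
  rel_of_edges [:: (0,1); (1,2); (2,3); (3,4); (4,0); (5,4); (5,0); (6,0); (6,1)].

(* ---- Cellular embeddings in orientable surfaces via rotation systems ----
   (Heffter-Edmonds): a rotation system assigns to each vertex x a cyclic
   permutation of its neighbourhood.  The faces of the corresponding 2-cell
   embedding are the orbits of the face-tracing map on darts
   (x,y) |-> (y, rho y x).  Euler: V - E + F = 2 - 2g. *)
Definition rotation_system (T : finType) (e : rel T) (rho : T -> {perm T}) : Prop :=
  forall x : T,
    (forall y, rho x y != y -> e x y) /\
    (forall y z, e x y -> e x z -> fconnect (rho x) y z).

Definition face_map (T : finType) (rho : T -> {perm T}) (d : T * T) : T * T :=
  (d.2, rho d.2 d.1).

Definition darts (T : finType) (e : rel T) : pred (T * T) :=
  [pred d | e d.1 d.2].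

(* number of faces (an edgeless graph, i.e. a single vertex, has one face) *)
Definition nfaces (T : finType) (e : rel T) (rho : T -> {perm T}) : nat :=
  if #|darts e| == 0 then 1 else fcard (face_map rho) (darts e).

Definition nedges (T : finType) (e : rel T) : nat := #|darts e| %/ 2.

Definition euler_rot (T : finType) (e : rel T) (rho : T -> {perm T}) : int :=
  ((Posz #|T|) - (Posz (nedges e)) + (Posz (nfaces e rho)))%R.

Definition planar (T : finType) (e : rel T) : Prop :=
  exists rho, rotation_system e rho /\ euler_rot e rho = (Posz 2).

(* has a 2-cell embedding in the plane or the torus (epsilon >= 0) *)
Definition toroidal (T : finType) (e : rel T) : Prop :=
  exists rho, rotation_system e rho /\ (0 <= euler_rot e rho)%R.

(* epsilon(G) = 0 : G embeds 2-cellularly in the torus but not in the plane *)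
Definition euler_char_zero (T : finType) (e : rel T) : Prop :=
  toroidal e /\ ~ planar e.

(* Main.v *)
Require Import Defs.
From mathcomp Require Import all_boot all_order all_fingroup all_algebra.
From mathcomp Require Import ring lra zify.
Set Implicit Arguments. Unset Strict Implicit. Unset Printing Implicit Defensive.

Lemma uniq5 (T : eqType) (a b c d h : T) : a != b -> a != c -> a != d -> a != h -> b != c -> b != d -> b != h -> c != d -> c != h -> d != h -> uniq [:: a; b; c; d; h].
Proof. by move=> *; rewrite /= !inE !negb_or; repeat (apply/andP; split). Qed.

Lemma uniq7 (T : eqType) (a b c d h x y : T) : a != b -> a != c -> a != d -> a != h -> a != x -> a != y ->
  b != c -> b != d -> b != h -> b != x -> b != y -> c != d -> c != h -> c != x -> c != y ->
  d != h -> d != x -> d != y -> h != x -> h != y -> x != y -> uniq [:: a; b; c; d; h; x; y].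
Proof. by move=> *; rewrite /= !inE !negb_or; repeat (apply/andP; split). Qed.

Import Order.TTheory GRing.Theory Num.Theory.

Lemma fourdiv (n m : nat) : (0 < m)%N -> (m <= n)%N -> (4 / n%:R <= 4 / m%:R :> rat)%R.
Proof.
move=> m0 mn; rewrite ler_pM2l //.
rewrite lef_pV2 ?ler_nat // ?posrE ?ltr0n //. by apply: leq_trans mn.
Qed.
Lemma fourpos (n : nat) : (0 <= 4 / n%:R :> rat)%R.
Proof. by rewrite divr_ge0 // ler0n. Qed.

Lemma sum_inv_order (U : finType) (f : U -> U) (finj : injective f) (a : pred U)
  (acl : fclosed f a) :
  (\sum_(x | a x) ((fingraph.order f x)%:R^-1 : rat) = (fcard f a)%:R)%R.
Proof.
have fsym := fconnect_sym finj.
have cl : forall x y, fconnect f x y -> a x = a y.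
  by move=> x y h; have := closed_connect acl h.
rewrite (partition_big (froot f) (fun r => a r && froots f r)); last first.
  move=> x ax; rewrite (roots_root fsym) andbT.
  by rewrite -(cl _ _ (connect_root _ x)).
rewrite /n_comp_mem -sum1_card natr_sum.
apply: eq_big => [r|r /andP[ar rr]]; first by rewrite !inE andbC.
have E : forall x, (a x && (froot f x == r)) = fconnect f r x.
  move=> x; apply/idP/idP.
    move=> /andP[ax /eqP <-]; rewrite fsym; exact: connect_root.
  move=> rx; have ax : a x by rewrite -(cl _ _ rx).
  by rewrite ax /=; rewrite -(eqP rr); apply/eqP/esym/(fingraph.rootP fsym).
rewrite (eq_bigl _ _ E).
rewrite (eq_bigr (fun _ => (fingraph.order f r)%:R^-1)%R); last first.
  move=> x rx; congr (_%:R^-1)%R; apply/esym/eq_card; exact: (same_connect fsym rx).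
rewrite sumr_const -[X in (_ *+ X)%R]/(fingraph.order f r) -(mulr_natr ((fingraph.order f r)%:R^-1)%R) mulVf // pnatr_eq0 -lt0n.
exact: fingraph.order_gt0.
Qed.

Lemma sum_reindex (U : finType) (h : U -> U) (F : U -> rat) :
  injective h -> (\sum_x F (h x) = \sum_x F x)%R.
Proof. by move=> hi; rewrite [RHS](reindex_inj hi). Qed.

Lemma arith6 (j k : nat) : (0 < j)%N -> j != 1%N -> j != 2%N -> (j < k.-1)%N -> j != k.-2 -> (2 < k)%N -> (5 < k)%N.
Proof. lia. Qed.

Lemma arith3 (j : nat) : (0 < j)%N -> j != 1%N -> j != 2%N -> (j < 5)%N -> j != 4%N -> j = 3%N.
Proof. lia. Qed.

Section Rot.
Variables (T : finType) (e : rel T) (rho : T -> {perm T}).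
Hypothesis esy : symmetric e.
Hypothesis eirr : irreflexive e.
Hypothesis hrot : rotation_system e rho.
Hypothesis hdeg : forall x, 3 < deg e x.
Hypothesis noC1 : ~ has_subgraph C1 e.
Hypothesis noC2 : ~ has_subgraph C2 e.

Lemma house (a b c d h : T) : uniq [:: a; b; c; d; h] -> e a b -> e b c -> e c d -> e d a -> e a h -> e h b -> False.
Proof.
move=> U ab bc cd da ah hb; apply: noC1.
exists (fun i : 'I_5 => nth a [:: a; b; c; d; h] i); split.
  by move=> i j /eqP; rewrite nth_uniq // => /eqP /val_inj.
have ba := ab; rewrite esy in ba. have cb := bc; rewrite esy in cb.
have dc := cd; rewrite esy in dc. have ad := da; rewrite esy in ad.
have ha := ah; rewrite esy in ha. have bh := hb; rewrite esy in bh.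
by move=> [[|[|[|[|[|i]]]]] Hi] [[|[|[|[|[|j]]]]] Hj].
Qed.

Lemma c2 (u1 u2 u3 u4 u5 x y : T) : uniq [:: u1; u2; u3; u4; u5; x; y] ->
  e u1 u2 -> e u2 u3 -> e u3 u4 -> e u4 u5 -> e u5 u1 -> e x u5 -> e x u1 -> e y u1 -> e y u2 -> False.
Proof.
move=> U h01 h12 h23 h34 h40 h54 h50 h60 h61; apply: noC2.
exists (fun i : 'I_7 => nth u1 [:: u1; u2; u3; u4; u5; x; y] i); split.
  by move=> i j /eqP; rewrite nth_uniq // => /eqP /val_inj.
have h10 := h01; rewrite esy in h10. have h21 := h12; rewrite esy in h21.
have h32 := h23; rewrite esy in h32. have h43 := h34; rewrite esy in h43.
have h04 := h40; rewrite esy in h04. have h45 := h54; rewrite esy in h45.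
have h05 := h50; rewrite esy in h05. have h06 := h60; rewrite esy in h06.
have h16 := h61; rewrite esy in h16.
by move=> [[|[|[|[|[|[|[|i]]]]]]] Hi] [[|[|[|[|[|[|[|j]]]]]]] Hj].
Qed.

Lemma eneq x y : e x y -> x != y.
Proof. by apply: contraTneq => ->; rewrite eirr. Qed.

Ltac neq := solve [ apply: eneq; (by []) | rewrite eq_sym; apply: eneq; (by []) | by [] | by rewrite eq_sym ].

Lemma rnb x y : e x y -> e x (rho x y).
Proof.
move=> exy; have [->//|ne] := eqVneq (rho x y) y.
apply: (hrot x).1; apply: contra_neq ne => /perm_inj //.
Qed.

Lemma rnbV x y : e x (rho x y) -> e x y.
Proof. move=> h; have [E|ne] := eqVneq (rho x y) y; first by rewrite -E. exact: (hrot x).1. Qed.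

Lemma rfix x y : ~~ e x y -> rho x y = y.
Proof. move=> h; apply/eqP; apply: contraNT h; exact: (hrot x).1. Qed.

Lemma rnb_iter x y n : e x y -> e x (iter n (rho x) y).
Proof. by move=> h; elim: n => //= n IH; apply: rnb. Qed.

Lemma rorbit x y : e x y -> fconnect (rho x) y =i nbhd e x.
Proof.
move=> h z; rewrite /nbhd inE; apply/idP/idP.
  by move=> /iter_findex <-; apply: rnb_iter.
by move=> hz; apply: (hrot x).2.
Qed.

Lemma rorder x y : e x y -> fingraph.order (rho x) y = deg e x.
Proof. by move=> h; rewrite /fingraph.order /deg; apply: eq_card (rorbit h). Qed.

Lemma rot_ne x y i j : e x y -> i < j < 4 -> iter i (rho x) y != iter j (rho x) y.
Proof.
move=> h /andP[ij j4]; have o := rorder h; have d4 := hdeg x.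
apply/negP => /eqP E.
have := findex_iter (f:=rho x) (x:=y) (i:=i); have := findex_iter (f:=rho x) (x:=y) (i:=j).
rewrite E o => -> //; last by apply: leq_trans j4 d4.
move=> /(_ (leq_trans (leq_trans ij (ltnW j4)) d4)) => E2; move: ij; rewrite E2 ltnn //.
Qed.

Lemma rot4 x y : e x y -> deg e x = 4 -> iter 4 (rho x) y = y.
Proof. by move=> h d4; rewrite -d4 -(rorder h) iter_order //; apply: perm_inj. Qed.

Definition fm := face_map rho.
Definition fi (d : T * T) := (((rho d.1)^-1)%g d.2, d.1).
Lemma fmK : cancel fm fi.
Proof. by case=> a b; rewrite /fm /fi /face_map /= permK. Qed.
Lemma fiK : cancel fi fm.
Proof. by case=> a b; rewrite /fm /fi /face_map /= permKV. Qed.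
Lemma fm_inj : injective fm. Proof. exact: can_inj fmK. Qed.
Lemma fi_inj : injective fi. Proof. exact: can_inj fiK. Qed.

Definition L d := fingraph.order fm d.
Definition rv (d : T * T) := (d.2, d.1).
Definition tri d := L d == 3.
Definition Tn d := tri (rv d).

Lemma rvK : involutive rv. Proof. by case. Qed.
Lemma rv_inj : injective rv. Proof. exact: inv_inj rvK. Qed.

Lemma L_fm d : L (fm d) = L d.
Proof. by rewrite /L /fingraph.order; apply/esym/eq_card => z; apply: (same_fconnect1 fm_inj). Qed.
Lemma L_fi d : L (fi d) = L d.
Proof. by rewrite -{2}(fiK d) L_fm. Qed.

Lemma iterL d : iter (L d) fm d = d.
Proof. rewrite /L; apply: iter_order; exact: fm_inj. Qed.

Lemma iter_ne d i : 0 < i < L d -> iter i fm d != d.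
Proof.
move=> /andP[i0 iL]; apply/negP => /eqP E.
have := findex_iter iL; rewrite E findex0 => i0'; by rewrite -i0' in i0.
Qed.

Lemma dart_fm d : e (fm d).1 (fm d).2 = e d.1 d.2.
Proof.
case: d => a b; rewrite /fm /face_map /= [e a b]esy; apply/idP/idP; [exact: rnbV | exact: rnb].
Qed.

Lemma dart_iter d n : e d.1 d.2 -> e (iter n fm d).1 (iter n fm d).2.
Proof. by move=> h; elim: n => //= n IH; rewrite dart_fm. Qed.

Lemma L3_dart d : 2 < L d -> e d.1 d.2.
Proof.
move=> hL; apply/negPn/negP => nd.
have: iter 2 fm d == d.
  case: d nd {hL} => a b nd; rewrite /= /fm /face_map /=.
  rewrite (rfix (x:=b) (y:=a)) ?(rfix (x:=a) (y:=b)) //; rewrite esy //.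
by rewrite (negbTE (iter_ne (i:=2) _)) // hL.
Qed.

Lemma dart_L d : e d.1 d.2 -> 2 < L d.
Proof.
case: d => a b /= h.
have o := fingraph.order_gt0 fm (a,b); rewrite -/(L (a,b)) in o.
case E: (L (a,b)) => [|[|[|n]]] //; first by rewrite E in o.
- have := iterL (a,b); rewrite E /= /fm /face_map /= => -[e1 _].
  by move: h; rewrite e1 eirr.
- have := iterL (a,b); rewrite E /= /fm /face_map /= => -[e1 _].
  have := rot_ne (x:=b) (y:=a) (i:=0) (j:=1); rewrite esy h /= e1 eqxx => /(_ isT isT) //.
Qed.


Lemma rne1 x a : e x a -> rho x a != a.
Proof. by move=> h; rewrite eq_sym; apply: (rot_ne (i:=0) (j:=1) h). Qed.

Lemma no2cyc x a b : e x a -> rho x a = b -> rho x b = a -> False.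
Proof. by move=> h e1 e2; have := rot_ne (i:=0) (j:=2) h isT; rewrite /= e1 e2 eqxx. Qed.

Lemma no3cyc x a b c : e x a -> rho x a = b -> rho x b = c -> rho x c = a -> False.
Proof. by move=> h e1 e2 e3; have := rot_ne (i:=0) (j:=3) h isT; rewrite /= e1 e2 e3 eqxx. Qed.

Lemma esymm x y : e x y -> e y x.
Proof. by rewrite esy. Qed.

Lemma three_tri x y y1 y2 y3 : e x y -> rho x y = y1 -> rho x y1 = y2 -> rho x y2 = y3 ->
  e y y1 -> e y1 y2 -> e y2 y3 -> False.
Proof.
move=> h r1 r2 r3 a1 a2 a3.
have n01 : y != y1 by rewrite -r1; apply: (rot_ne (i:=0) (j:=1) h).
have n02 : y != y2 by rewrite -r2 -r1; apply: (rot_ne (i:=0) (j:=2) h).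
have n03 : y != y3 by rewrite -r3 -r2 -r1; apply: (rot_ne (i:=0) (j:=3) h).
have n12 : y1 != y2 by rewrite -r2 -r1; apply: (rot_ne (i:=1) (j:=2) h).
have n13 : y1 != y3 by rewrite -r3 -r2 -r1; apply: (rot_ne (i:=1) (j:=3) h).
have n23 : y2 != y3 by rewrite -r3 -r2 -r1; apply: (rot_ne (i:=2) (j:=3) h).
have h1 : e x y1 by rewrite -r1; apply: rnb.
have h2 : e x y2 by rewrite -r2; apply: rnb.
have h3 : e x y3 by rewrite -r3; apply: rnb.
apply: (house (a:=x) (b:=y2) (c:=y1) (d:=y) (h:=y3)).
- by apply: uniq5 => //; try (by apply: eneq); rewrite eq_sym.
- by [].
- by rewrite esy.
- by rewrite esy.
- by rewrite esy.
- by [].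
- by rewrite esy.
Qed.

Lemma tri_rot x y : L (x,y) = 3 -> rho (rho y x) y = x /\ rho x (rho y x) = y.
Proof.
move=> h3; have := iterL (x,y); rewrite h3 /= /fm /face_map /= => -[e1 e2].
by rewrite e1 in e2.
Qed.

Lemma tri_edges x y : L (x,y) = 3 -> [/\ e x y, e y (rho y x) & e (rho y x) x].
Proof.
move=> h3; have hxy : e x y by apply: (L3_dart (d:=(x,y))); rewrite h3.
split => //; first by apply: rnb; rewrite esy.
have := dart_iter (d:=(x,y)) 2 hxy; rewrite /= /fm /face_map /= (tri_rot h3).1 //.
Qed.

Lemma fi_tri d : L d = 3 -> fi d = fm (fm d).
Proof. by move=> h; rewrite -{1}(iterL d) h /= fmK. Qed.

Lemma fi5 d : L d = 5 -> fi (fi d) = fm (fm (fm d)).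
Proof. by move=> h; rewrite -{1}(iterL d) h /= !fmK. Qed.

Lemma no4 d : Tn d -> L d != 4.
Proof.
case: d => u w; rewrite /Tn /tri /rv /= => /eqP t3.
have [ewu euz ezw] := tri_edges t3.
have [t1 t2] := tri_rot t3.
apply/eqP => h4.
have := iterL (u,w); rewrite h4 /= /fm /face_map /=.
set p := rho w u; set q := rho p w; set z := rho u w.
move=> -[e1 e2]; rewrite e1 in e2.
have euw : e u w by rewrite esy.
have ewp : e w p by apply: rnb.
have epq : e p q by apply: rnb; rewrite esy.
have eqp : e q p by rewrite esy.
have equ : e q u by rewrite -e1; apply: rnb.
have ezw' : e z w by rewrite esy in ezw; rewrite -/z in ezw *; move: ezw; rewrite esy.
have nup : u != p by rewrite eq_sym rne1.
have nwq : w != q by rewrite eq_sym rne1 // esy.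
have npz : p != z.
  apply/eqP => E; apply: (no2cyc (x:=w) (a:=u) (b:=p)) => //.
  by rewrite E t2.
have nqz : q != z.
  apply/eqP => E; apply: (no2cyc (x:=u) (a:=w) (b:=q)) => //.
apply: (house (a:=u) (b:=w) (c:=p) (d:=q) (h:=z)); first by apply: uniq5 => //; neq.
all: try done.
all: try (by rewrite esy -e1; apply: rnb).
all: by rewrite -/z; apply: rnb.
Qed.


Lemma tri_adj r : L r = 3 -> Tn r -> Tn (fm r) -> False.
Proof.
case: r => x y; rewrite /Tn /tri /rv /fm /face_map /= => h3 /eqP t1 /eqP t2.
have [exy eyz ezx] := tri_edges h3.
have [eyx exw ewy] := tri_edges t1.
have [_ rw] := tri_rot t1.
have [ezy eyv evz] := tri_edges t2.
apply: (three_tri (x:=y) (y:=rho x y) (y1:=x) (y2:=rho y x) (y3:=rho y (rho y x))) => //.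
all: by rewrite esy.
Qed.

Lemma no_c2 d : L d = 5 -> Tn d -> Tn (fm d) -> False.
Proof.
case: d => p u h5; rewrite /Tn /tri /rv /fm /face_map /= => /eqP t1 /eqP t2.
have epu : e p u by apply: (L3_dart (d:=(p,u))); rewrite h5.
have [eup epx exu] := tri_edges t1.
have [xr1 xr2] := tri_rot t1.
have [equ euy eyq] := tri_edges t2.
have := iterL (p,u); rewrite h5 /= /fm /face_map /=.
set q := rho u p in t2 equ euy eyq *; set r1 := rho q u; set r2 := rho r1 q.
set x := rho p u in epx exu xr1 xr2 *; set y := rho u q in euy eyq *.
move=> -[e1 e2]; rewrite e1 in e2.
have euq : e u q by apply: rnb.
have eqr1 : e q r1 by apply: rnb; rewrite esy.
have er1r2 : e r1 r2 by apply: rnb; rewrite esy.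
have er2p : e r2 p by rewrite -e1; apply: rnb; rewrite esy.
have nur1 : u != r1 by rewrite eq_sym rne1 // esy.
have nur2 : u != r2.
  apply/eqP => E; rewrite -E in e2; have := rne1 epu; rewrite e2 eqxx //.
have nqr2 : q != r2 by rewrite eq_sym rne1 // esy.
have nqp : q != p by rewrite rne1.
have nqx : q != x.
  by apply/eqP => E; apply: (no2cyc (x:=u) (a:=p) (b:=q)) => //; rewrite E.
have nr1p : r1 != p by rewrite -e1 eq_sym rne1 // esy.
have npy : p != y.
  by apply/eqP => E; apply: (no2cyc (x:=u) (a:=p) (b:=q)) => //; rewrite -/y -E.
have nxy : x != y.
  apply/eqP => E; apply: (no3cyc (x:=u) (a:=x) (b:=p) (c:=q)) => //; try by rewrite esy.
have chord1 : e u r1 -> False.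
  move=> eur1; apply: (house (a:=u) (b:=r1) (c:=r2) (d:=p) (h:=q)) => //.
  by apply: uniq5 => //; neq.
have chord2 : e u r2 -> False.
  move=> eur2; apply: (house (a:=r2) (b:=u) (c:=q) (d:=r1) (h:=p)) => //.
  - by apply: uniq5 => //; neq.
  - by rewrite esy.
have nr1x : r1 != x by apply/eqP => E; apply: chord1; rewrite E esy.
have nr1y : r1 != y by apply/eqP => E; apply: chord1; rewrite E.
have nr2x : r2 != x by apply/eqP => E; apply: chord2; rewrite E esy.
have nr2y : r2 != y by apply/eqP => E; apply: chord2; rewrite E.
apply: (c2 (u1:=u) (u2:=q) (u3:=r1) (u4:=r2) (u5:=p) (x:=x) (y:=y)) => //.
- by apply: uniq7 => //; neq.
- by rewrite esy.
- by rewrite esy.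
Qed.


Lemma good_a r : L r = 3 -> Tn (fm r) -> Tn (fi (rv r)) -> deg e r.2 != 4.
Proof.
case: r => x y; rewrite /Tn /tri /rv /fm /fi /face_map /= => h3 /eqP t1 /eqP t2.
apply/eqP => d4.
set t := ((rho y)^-1)%g x in t2.
have ryt : rho y t = x by rewrite /t permKV.
have [exy eyz ezx] := tri_edges h3.
have [ezy eyw ewz] := tri_edges t1.
have [eyt ets est] := tri_edges t2.
have [_ rys] := tri_rot t2.
have rwt : rho y (rho y (rho y x)) = t.
  by have := rot4 eyt d4; rewrite /= ryt.
have sw : rho t y = rho y (rho y x) by apply: (perm_inj (s:=rho y)); rewrite rys rwt.
apply: (three_tri (x:=y) (y:=x) (y1:=rho y x) (y2:=rho y (rho y x)) (y3:=t)) => //.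
- by rewrite esy.
- by rewrite esy.
- by rewrite esy.
- by rewrite -sw esy.
Qed.

Lemma good_b r : L r = 3 -> Tn (fi r) -> Tn (fm (rv r)) -> deg e r.1 != 4.
Proof.
case: r => z x h3; rewrite (fi_tri h3).
rewrite /Tn /tri /rv /fm /face_map /= => /eqP t1 /eqP t2.
have [ry rz] := tri_rot h3.
rewrite ry in t1.
have [ezx exy eyz] := tri_edges h3.
have [ezy eyw ewz] := tri_edges t1.
have [rw rzw] := tri_rot t1.
have [etz ezs est] := tri_edges t2.
set y := rho x z in ry rz t1 exy eyz ezy eyw ewz rw rzw *.
apply/eqP => d4.
have ezw : e z (rho y z) by rewrite esy.
have rzt : rho z (rho z x) = rho y z.
  by have := rot4 ezw d4; rewrite /= rzw rz.
apply: (three_tri (x:=z) (y:=rho z x) (y1:=rho y z) (y2:=y) (y3:=x)) => //.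
- by apply: rnb.
- by rewrite -rzt esy.
- by rewrite esy.
- by rewrite esy.
Qed.

Lemma nontri x : exists2 p, e p x & ~~ tri (p, x).
Proof.
have /card_gt0P [y]: 0 < #|nbhd e x| by apply: leq_trans (hdeg x).
rewrite /nbhd inE => exy.
have h1 : e x (rho x y) by apply: rnb.
have h2 : e x (rho x (rho x y)) by apply: rnb.
case t0: (tri (y,x)); last by exists y; [rewrite esy | rewrite t0].
case t1: (tri (rho x y, x)); last by exists (rho x y); [rewrite esy | rewrite t1].
case t2: (tri (rho x (rho x y), x)); last by exists (rho x (rho x y)); [rewrite esy | rewrite t2].
exfalso; move/eqP: t0 => t0; move/eqP: t1 => t1; move/eqP: t2 => t2.
have [_ _ a0] := tri_edges t0.
have [_ _ a1] := tri_edges t1.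
have [_ _ a2] := tri_edges t2.
apply: (three_tri (x:=x) (y:=y) (y1:=rho x y) (y2:= rho x (rho x y)) (y3:= rho x (rho x (rho x y)))) => //.
all: by rewrite esy.
Qed.


Definition D (d : T * T) := deg e d.2.
Definition k1 d := Tn (fm (rv d)).
Definition k2 d := Tn (fm (fm (rv d))).
Definition good d := (k1 d && ~~ Tn (fi d)) || (k2 d && ~~ Tn (fm d)).

Local Open Scope ring_scope.

Definition xD d : rat := 4 / (D d)%:R.
Definition yL d : rat := 4 / (L d)%:R.
Definition mu d : rat := if e d.1 d.2 then 2 - xD d - yL d else 0.
Definition grev d : rat := if Tn d && (4 < L d)%N then
  (if L d == 5%N then 1/2 else 1/3 + (if good d then 1/6 else 0)) else 0.
Definition gnext d : rat := if ~~ Tn d && Tn (fm d) then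
   (if L d == 5%N then (if Tn (fi d) then 1/10 else 1/5)
    else if (5 < L d)%N then (if k1 (fm d) then 1/6 else 0) else 0) else 0.
Definition gprev d : rat := if ~~ Tn d && Tn (fi d) then
   (if L d == 5%N then (if Tn (fm d) then 1/10 else 1/5)
    else if (5 < L d)%N then (if k2 (fi d) then 1/6 else 0) else 0) else 0.
Definition gtn d : rat := if tri d && ~~ Tn d && Tn (fm d) then 1/6 else 0.
Definition gtp d : rat := if tri d && ~~ Tn d && Tn (fi d) then 1/6 else 0.
Definition gsh d : rat := if tri d && Tn d && Tn (fm (rv (fm d))) then 1/6 else 0.
Definition out d := grev d + gnext d + gprev d + gtn d + gtp d + gsh d.
Definition inn d := grev (rv d) + gnext (fi d) + gprev (fm d) + gtn (fi d) + gtp (fm d) + gsh (fi d).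
Definition mus d := mu d - out d + inn d.

Lemma gifts_small x : (L x < 3)%N ->
  grev x = 0 /\ gnext x = 0 /\ gprev x = 0 /\ gtn x = 0 /\ gtp x = 0 /\ gsh x = 0.
Proof.
move=> h.
have n5 : (L x == 5%N) = false by apply/negbTE; move: h; case: (L x) => [|[|[|]]].
have n6 : (5 < L x)%N = false by apply/negbTE; rewrite -leqNgt; apply: leq_trans (ltnW h) _.
have n4 : (4 < L x)%N = false by apply/negbTE; rewrite -leqNgt; apply: leq_trans (ltnW h) _.
have n3 : tri x = false by rewrite /tri; apply/negbTE; move: h; case: (L x) => [|[|[|]]].
by rewrite /grev /gnext /gprev /gtn /gtp /gsh n5 n6 n4 n3 /= !if_same !andbF; repeat split.
Qed.

Lemma nondart_small d : ~~ e d.1 d.2 -> (L d < 3)%N.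
Proof. by move=> h; rewrite ltnNge; apply: contra h => /L3_dart. Qed.

Lemma mus_nondart d : ~~ e d.1 d.2 -> mus d = 0.
Proof.
move=> nd.
have nd' : ~~ e (rv d).1 (rv d).2 by rewrite /= esy.
have s1 := nondart_small nd; have s2 := nondart_small nd'.
have s3 : (L (fi d) < 3)%N by rewrite L_fi.
have s4 : (L (fm d) < 3)%N by rewrite L_fm.
have [a1 [a2 [a3 [a4 [a5 a6]]]]] := gifts_small s1.
have [b1 _] := gifts_small s2.
have [_ [c2 [_ [c4 [_ c6]]]]] := gifts_small s3.
have [_ [_ [d3 [_ [d5 _]]]]] := gifts_small s4.
by rewrite /mus /out /inn /mu (negbTE nd) a1 a2 a3 a4 a5 a6 b1 c2 c4 c6 d3 d5 /=; rewrite ?addr0 ?subr0 ?add0r ?sub0r //.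
Qed.


Lemma Tn_rv d : Tn (rv d) = tri d. Proof. by rewrite /Tn rvK. Qed.
Lemma tri_fi d : tri (fi d) = tri d. Proof. by rewrite /tri L_fi. Qed.
Lemma tri_fm d : tri (fm d) = tri d. Proof. by rewrite /tri L_fm. Qed.
Lemma fm3 d : L d = 3%N -> fm (fm (fm d)) = d.
Proof. by move=> h; rewrite -[RHS](iterL d) h. Qed.

Lemma xbounds d : 0 <= xD d /\ xD d <= 1.
Proof.
rewrite /xD; split; first exact: fourpos.
have := fourdiv (n:=D d) (m:=4) isT (hdeg d.2); by rewrite (_ : 4 / 4%:R = 1 :> rat) // divff.
Qed.

Lemma x45 d : deg e d.2 != 4%N -> xD d <= 4 / 5%:R.
Proof. move=> h; rewrite /xD; apply: fourdiv => //; rewrite /D ltn_neqAle eq_sym h; exact: hdeg. Qed.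

Lemma mu_dart d : e d.1 d.2 -> mu d = 2 - xD d - yL d.
Proof. by rewrite /mu => ->. Qed.

Ltac prune := cbv beta delta [negb andb orb implb] iota;
  try (intros; match goal with H : is_true false |- _ => discriminate H end).

Lemma mus_3 d : L d = 3%N -> 0 <= mus d.
Proof.
move=> h3; have hd : e d.1 d.2 by apply: L3_dart; rewrite h3.
have [x0 x1] := xbounds d.
have f1 : ~~ (Tn d && Tn (fm d)) by apply/negP => /andP[a b]; apply: (tri_adj h3 a b).
have f2 : ~~ (Tn d && Tn (fm (fm d))).
  apply/negP => /andP[a b]; apply: (tri_adj (r:=fm (fm d))); rewrite ?L_fm // fm3 //.
have f3 : ~~ (Tn (fm d) && Tn (fm (fm d))).
  by apply/negP => /andP[a b]; apply: (tri_adj (r:=fm d)); rewrite ?L_fm.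
have f4 : Tn d ==> ~~ (4 < L (rv d))%N by apply/implyP; rewrite /Tn /tri => /eqP ->.
have f5 : ~~ Tn d ==> (4 < L (rv d))%N.
  apply/implyP => nA; have hr : e (rv d).1 (rv d).2 by rewrite /= esy.
  have := dart_L hr; have := no4 (d:=rv d); rewrite Tn_rv /tri h3 eqxx => /(_ isT).
  move: nA; rewrite /Tn /tri; case: (L (rv d)) => [|[|[|[|[|n]]]]] //.
have r1 : xD d <= if Tn d && Tn (fm (rv (fm d))) then 4 / 5%:R else 1.
  case: ifP => // /andP[a b]; apply: x45; have := good_b (r:=fm d); rewrite L_fm h3 fmK => /(_ erefl a b).
  by [].
have r2 : xD d <= if Tn (fm d) && Tn (fi (rv d)) then 4 / 5%:R else 1.
  by case: ifP => // /andP[a b]; apply: x45; apply: (good_a h3 a b).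
rewrite /mus /out /inn (mu_dart hd) /grev /gnext /gprev /gtn /gtp /gsh Tn_rv !tri_fi !tri_fm fiK fmK.
rewrite L_fi L_fm (fi_tri h3) /good /k1 /k2 rvK {1 2 3 4 5 6 7}/tri h3 eqxx.
rewrite !if_same /yL h3 (_ : (4 < 3)%N = false) // andbF.
move: f1 f2 f3 f4 f5 r1 r2.
case: (Tn d); prune; case: (Tn (fm d)); prune; case: (Tn (fm (fm d))); prune;
case: (4 < L (rv d))%N; prune; case: (Tn (fi (rv d))); prune;
case: (Tn (fm (rv d))); prune; case: (Tn (fm (rv (fm d)))); prune;
case: (L (rv d) == 5%N); prune.
all: intros; lra.
Qed.


Lemma mus_4 d : L d = 4%N -> mus d = 1 - xD d.
Proof.
move=> h4; have hd : e d.1 d.2 by apply: L3_dart; rewrite h4.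
rewrite /mus /out /inn (mu_dart hd) /grev /gnext /gprev /gtn /gtp /gsh Tn_rv !tri_fi !tri_fm fiK fmK.
rewrite L_fi L_fm /tri h4 /yL (_ : (4 < 4)%N = false) // (_ : (5 < 4)%N = false) //.
rewrite (_ : (4 == 3)%N = false) // (_ : (4 == 5)%N = false) //.
rewrite !andbF !andFb; cbv beta delta [negb andb orb implb] iota; rewrite ?if_same.
rewrite h4 (_ : 4 / 4%:R = 1 :> rat); last by rewrite divff.
lra.
Qed.

Lemma mus_5 d : L d = 5%N -> 1 - xD d <= mus d.
Proof.
move=> h5; have hd : e d.1 d.2 by apply: L3_dart; rewrite h5.
have [x0 x1] := xbounds d.
have f1 : ~~ (Tn d && Tn (fm d)) by apply/negP => /andP[a b]; apply: (no_c2 h5 a b).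
have f2 : ~~ (Tn (fi d) && Tn d).
  apply/negP => /andP[a b]; apply: (no_c2 (d:=fi d)); rewrite ?L_fi ?fiK //.
have f3 : ~~ (Tn (fm (fm d)) && Tn (fi (fi d))).
  apply/negP => /andP[a b]; apply: (no_c2 (d:=fm (fm d))); rewrite ?L_fm // -fi5 //.
rewrite /mus /out /inn (mu_dart hd) /grev /gnext /gprev /gtn /gtp /gsh Tn_rv !tri_fi !tri_fm fiK fmK.
rewrite L_fi L_fm /yL /tri h5 (_ : (4 < 5)%N = true) // eqxx.
rewrite (_ : (5 == 3)%N = false) //.
rewrite ?andbF ?andFb ?andbT; cbv beta delta [negb andb orb implb] iota; rewrite ?if_same.
move: f1 f2 f3.
case: (Tn d); prune; case: (Tn (fm d)); prune; case: (Tn (fi d)); prune;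
case: (Tn (fm (fm d))); prune; case: (Tn (fi (fi d))); prune.
all: intros; lra.
Qed.

Lemma mus_big d : (5 < L d)%N ->
  1 - xD d + (2/3 - yL d) + (if ~~ Tn d && ~~ Tn (fm d) then 1/6 else 0) <= mus d.
Proof.
move=> h6; have hd : e d.1 d.2 by apply: L3_dart; apply: leq_trans h6.
have n5 : (L d == 5%N) = false by apply/negbTE; move: h6; case: (L d) => [|[|[|[|[|[|]]]]]].
have n3 : (L d == 3%N) = false by apply/negbTE; move: h6; case: (L d) => [|[|[|[|]]]].
have n4 : (4 < L d)%N by apply: ltnW.
rewrite /mus /out /inn (mu_dart hd) /grev /gnext /gprev /gtn /gtp /gsh Tn_rv !tri_fi !tri_fm fiK fmK.
rewrite L_fi L_fm /tri n5 n3 h6 n4 /good.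
rewrite ?andbF ?andFb ?andbT; cbv beta delta [negb andb orb implb] iota; rewrite ?if_same.
rewrite /k1 ?fiK.
case: (Tn d); prune; case: (Tn (fm d)); prune; case: (Tn (fi d)); prune;
case: (Tn (fm (rv d))); prune; case: (k2 d); prune;
case: (Tn (fm (rv (fm d)))); prune; case: (k2 (fi d)); prune.
all: intros; lra.
Qed.

Lemma sum_mus : \sum_d mus d = \sum_d mu d.
Proof.
have E : \sum_d inn d = \sum_d out d.
  rewrite /inn /out !big_split /=.
  rewrite (sum_reindex grev rv_inj) (sum_reindex gnext fi_inj) (sum_reindex gprev fm_inj).
  by rewrite (sum_reindex gtn fi_inj) (sum_reindex gtp fm_inj) (sum_reindex gsh fi_inj).
by rewrite /mus big_split sumrB /= E subrK.
Qed.

Lemma darts_closed : fclosed fm (darts e).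
Proof. by move=> x y /eqP <-; rewrite !inE /= dart_fm. Qed.

Lemma sum_yL : \sum_(d | e d.1 d.2) yL d = (4 * fcard fm (darts e))%:R.
Proof.
rewrite /yL -mulr_sumr natrM; congr (_ * _).
rewrite -(sum_inv_order fm_inj darts_closed); apply: eq_big => // d.
Qed.

Lemma sum_xD : \sum_(d | e d.1 d.2) xD d = (4 * #|T|)%:R.
Proof.
rewrite big_mkcond /= -(pair_big predT predT (fun u w => if e u w then 4 / (deg e w)%:R else 0)) /=.
rewrite exchange_big /=.
rewrite (eq_bigr (fun _ => 4)); last first.
  move=> w _; rewrite -big_mkcond /= sumr_const.
  have -> : #|[pred u | e u w]| = deg e w.
    by apply: eq_card => u; rewrite /nbhd !inE esy.
  rewrite -(mulr_natr (4 / (deg e w)%:R)) divfK // pnatr_eq0 -lt0n.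
  by apply: leq_trans (hdeg w).
by rewrite sumr_const natrM -(mulr_natr (4 : rat)).
Qed.

Lemma sum_mu_val : \sum_d mu d =
  (2 * #|darts e|)%:R - (4 * #|T|)%:R - (4 * fcard fm (darts e))%:R.
Proof.
rewrite (eq_bigr (fun d => if e d.1 d.2 then 2 - xD d - yL d else 0)) // -big_mkcond /=.
rewrite !sumrB sum_xD sum_yL sumr_const; congr (_ - _ - _).
by rewrite natrM mulr_natr.
Qed.

Lemma darts_even : #|darts e| = (#|[set d : T * T | e d.1 d.2 && (enum_rank d.1 < enum_rank d.2)%N]|).*2.
Proof.
set A := [set d : T * T | e d.1 d.2 && (enum_rank d.1 < enum_rank d.2)%N].
rewrite -(cardID [pred d : T * T | (enum_rank d.1 < enum_rank d.2)%N] (darts e)) -addnn.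
congr (_ + _).
  by apply: eq_card => d; rewrite !inE.
rewrite -(card_preimset A rv_inj); apply: eq_card => d; rewrite !inE /=.
rewrite [e d.2 d.1]esy andbC; case h: (e d.1 d.2) => //=.
have : enum_rank d.1 != enum_rank d.2.
  by apply: contra_neq (eneq h) => /enum_rank_inj.
by move=> ne; rewrite -leqNgt [RHS]ltn_neqAle eq_sym ne.
Qed.

Lemma darts_pos (x0 : T) : #|darts e| != 0%N.
Proof.
have /card_gt0P [y]: (0 < #|nbhd e x0|)%N by apply: leq_trans (hdeg x0).
rewrite /nbhd inE => h; apply/eqP => E.
have := card0_eq E (x0, y); by rewrite inE /= h.
Qed.

Lemma nfaces_val (x0 : T) : nfaces e rho = fcard fm (darts e).
Proof. by rewrite /nfaces (negbTE (darts_pos x0)). Qed.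

Lemma key_ineq (x0 : T) : (0 <= \sum_d mus d) -> (2 * (#|T| + nfaces e rho) <= #|darts e|)%N.
Proof.
rewrite sum_mus sum_mu_val (nfaces_val x0) => h.
have : ((4 * #|T| + 4 * fcard fm (darts e))%:R <= (2 * #|darts e|)%:R :> rat).
  rewrite natrD; lra.
rewrite ler_nat => h2.
rewrite -(leq_pmul2l (isT : 0 < 2)%N) mulnA mulnDr; by [].
Qed.

Lemma yL6 d : (5 < L d)%N -> yL d <= 4 / 6%:R.
Proof. by move=> h; apply: fourdiv. Qed.

Lemma mus_nontri d : e d.1 d.2 -> ~~ tri d -> 1 - xD d <= mus d.
Proof.
move=> hd nt; have := dart_L hd; have [x0 x1] := xbounds d.
move: nt; rewrite /tri.
case E: (L d) => [|[|[|[|[|[|n]]]]]] //= _ _.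
- by rewrite mus_4.
- exact: mus_5.
- have h6 : (5 < L d)%N by rewrite E.
  have := mus_big h6; have := yL6 h6.
  case: ifP => _ *; lra.
Qed.

Lemma mus_ge0 d : 0 <= mus d.
Proof.
have [hd|nd] := boolP (e d.1 d.2); last by rewrite mus_nondart.
have [x0 x1] := xbounds d.
have [t|nt] := boolP (tri d); first by apply: mus_3; apply/eqP.
have := mus_nontri hd nt; lra.
Qed.

Lemma sum_mus_ge0 : 0 <= \sum_d mus d.
Proof. by apply: sumr_ge0 => d _; apply: mus_ge0. Qed.

Lemma sum_mus_gt0 : (exists d, 0 < mus d) -> 0 < \sum_d mus d.
Proof.
move=> [d hd]; rewrite (bigD1 d) //=.
have : 0 <= \sum_(i | i != d) mus i by apply: sumr_ge0 => i _; apply: mus_ge0.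
lra.
Qed.

Lemma key_strict (x0 : T) : (exists d, 0 < mus d) -> (2 * (#|T| + nfaces e rho) < #|darts e|)%N.
Proof.
move=> /sum_mus_gt0; rewrite sum_mus sum_mu_val (nfaces_val x0) => h.
have : ((4 * #|T| + 4 * fcard fm (darts e))%:R < (2 * #|darts e|)%:R :> rat).
  rewrite natrD; lra.
rewrite ltr_nat => h2.
rewrite -(ltn_pmul2l (isT : 0 < 2)%N) mulnA mulnDr; by [].
Qed.

Lemma nedges_val : nedges e = #|[set d : T * T | e d.1 d.2 && (enum_rank d.1 < enum_rank d.2)%N]|.
Proof. by rewrite /nedges darts_even divn2 doubleK. Qed.

Lemma euler_le0 (x0 : T) : (euler_rot e rho <= 0)%R.
Proof.
have h := key_ineq x0 sum_mus_ge0; rewrite darts_even -mul2n leq_pmul2l // in h.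
by rewrite /euler_rot nedges_val addrAC subr_le0 -PoszD lez_nat.
Qed.

Lemma euler_lt0 (x0 : T) : (exists d, 0 < mus d) -> (euler_rot e rho < 0)%R.
Proof.
move=> ex; have h := key_strict x0 ex; rewrite darts_even -mul2n ltn_pmul2l // in h.
by rewrite /euler_rot nedges_val addrAC subr_lt0 -PoszD ltz_nat.
Qed.

Lemma regular4 (x0 : T) : (0 <= euler_rot e rho)%R -> forall x, deg e x = 4%N.
Proof.
move=> he x; apply/eqP/negP => /negP nx.
have [p epx ntp] := nontri x.
have hpos : exists d, 0 < mus d.
  exists (p, x); have := mus_nontri (d:=(p,x)) epx ntp; have := x45 (d:=(p,x)) nx.
  have [x0' x1'] := xbounds (p,x); lra.
by have := euler_lt0 x0 hpos; rewrite ltNge he.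
Qed.

Lemma find_switch (P : pred T) (f : T -> T) a n :
  P a -> ~~ P (iter n f a) -> exists i, P (iter i f a) && ~~ P (iter i.+1 f a).
Proof.
move=> Pa; elim: n => [|n IH]; first by rewrite /= Pa.
case Pn: (P (iter n f a)) => h; first by exists n; rewrite Pn h.
by apply: IH; rewrite Pn.
Qed.

Lemma Gv_sym v : symmetric (del_vertex e v).
Proof. by move=> a b; rewrite /del_vertex /= [e a b]esy; case: (e b a) => //=; apply: andbC. Qed.

Lemma reach (conn : connected_graph e) v u : u != v ->
  exists2 p, e p v & connect (del_vertex e v) u p.
Proof.
move=> uv; have /connectP [s pth lst] := conn u v.
elim: s u uv pth lst => [|w s IH] u uv /=; first by move=> _ E; rewrite E eqxx in uv.
move=> /andP[euw pth] lst.
have [wv|wv] := eqVneq w v; first by exists u; [rewrite -wv | exact: connect0].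
have [p epv cwp] := IH w wv pth lst.
exists p => //; apply: connect_trans cwp; apply: connect1.
by rewrite /del_vertex /= euw uv wv.
Qed.

Lemma cut_pos (reg : forall x, deg e x = 4%N) (conn : connected_graph e) v x y :
  x != v -> y != v -> ~~ connect (del_vertex e v) x y -> exists d, 0 < mus d.
Proof.
move=> xv yv nxy.
set G := del_vertex e v.
have Gs : connect_sym G by apply: sym_connect_sym; apply: Gv_sym.
have [p epv cxp] := reach conn xv.
have [q eqv cyq] := reach conn yv.
set C := connect G p.
have nCq : ~~ C q.
  apply: contra nxy => cpq; apply: connect_trans cxp _; apply: connect_trans cpq _.
  by rewrite Gs.
have evp : e v p by rewrite esy.
have evq : e v q by rewrite esy.
have fpq : fconnect (rho v) p q by apply: (hrot v).2.
have nCq' : ~~ C (iter (findex (rho v) p q) (rho v) p) by rewrite iter_findex.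
have [i /andP[Ca nCb]] := find_switch (P:=C) (f:=rho v) (a:=p) (connect0 G p) nCq'.
set a := iter i (rho v) p in Ca nCb.
have eva : e v a by apply: rnb_iter.
have eav : e a v by rewrite esy.
set b := rho v a in nCb.
rewrite /= -/a -/b in nCb.
set d0 := (a, v).
have hd0 : e d0.1 d0.2 by [].
set k := L d0.
set h := fun j => (iter j fm d0).2.
have Hd : forall j, e (h j.-1) (h j) /\ (0 < j)%N -> e (h j.-1) (h j).
  by move=> j [] //.
have Hdart : forall j, e (iter j fm d0).1 (h j) by move=> j; apply: dart_iter.
have H1 : forall j, (iter j.+1 fm d0).1 = h j by [].
have Hedge : forall j, e (h j) (h j.+1) by move=> j; rewrite -H1; apply: Hdart.
have Hnb : forall j, h j.+2 != h j.
  move=> j; rewrite /h /= -/(h j.+1).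
  have : (iter j.+1 fm d0).1 = h j by [].
  rewrite /= => ->; apply: rne1; rewrite esy; apply: Hedge.
have h0 : h 0%N = v by [].
have h1 : h 1%N = b by [].
have hk : h k = v by rewrite /h /k iterL.
have k3 : (2 < k)%N by apply: dart_L.
have hk1 : h k.-1 = a.
  have E0 : fm (iter k.-1 fm d0) = d0.
    rewrite -iterS prednK; first exact: iterL.
    by apply: leq_trans k3.
  have E1 := congr1 fi E0; rewrite fmK in E1.
  by rewrite /h E1.
have Hrec : forall j, h j.+2 = rho (h j.+1) (h j) by [].
have bv : b != v by rewrite eq_sym; apply: eneq; apply: rnb.
have av : a != v by apply: eneq.
have Cbn : forall z, connect G b z -> C z -> False.
  move=> z bz Cz; move/negP: nCb; apply; apply: connect_trans Cz _; by rewrite Gs.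
have [j /andP[j0 /andP[jk /eqP hj]]] : exists j, [&& (0 < j)%N, (j < k.-1)%N & h j == v].
  case: (boolP [exists j : 'I_k, (0 < j)%N && (h j == v)]).
    move=> /existsP [[j jk] /= /andP[j0 hj]]; exists j; rewrite j0 hj andbT /=.
    rewrite ltn_neqAle -ltnS prednK ?jk ?andbT; last by apply: leq_trans k3.
    by apply: contraTneq hj => ->; rewrite hk1.
  move=> /existsPn nex; exfalso.
  have step : forall j, (0 < j)%N -> (j < k)%N -> connect G b (h j).
    elim => [//|j IH] _ jk.
    case: j IH jk => [|j] IH jk; first by rewrite h1; apply: connect0.
    apply: connect_trans (IH isT (ltnW jk)) _; apply: connect1.
    rewrite /G /del_vertex /= Hedge.
    have := nex (Ordinal (ltnW jk)); have := nex (Ordinal jk); rewrite /= => -> ->.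
    by [].
  have := step k.-1; rewrite hk1 => /(_ _ _) hba.
  apply: (Cbn a) => //; apply: hba; last by rewrite prednK // ; apply: leq_trans k3.
  by rewrite -ltnS prednK //; apply: leq_trans k3.
have j1 : j != 1%N by apply/eqP => E; rewrite E h1 in hj; by rewrite hj eqxx in bv.
have j2 : j != 2%N by apply/eqP => E; rewrite E in hj; have := Hnb 0%N; rewrite hj h0 eqxx.
have jk2 : j != k.-2.
  apply/eqP => E; have := Hnb k.-2; rewrite -E hj (_ : j.+2 = k) ?hk ?eqxx //.
  by rewrite E -addn2 -subn2 subnK // ltnW.
have k6 : (5 < k)%N by apply: (arith6 j0 j1 j2 jk jk2 k3).
have hpos : forall d, (5 < L d)%N -> (6 < L d)%N || (~~ Tn d && ~~ Tn (fm d)) -> 0 < mus d.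
  move=> d h6 hor; have := mus_big h6; have [x0 x1] := xbounds d.
  case/orP: hor => [h7|hn].
    have := fourdiv (n:=L d) (m:=7) isT h7; rewrite -/(yL d) => y7.
    by case: ifP => _ *; lra.
  rewrite hn; have := yL6 h6; move=> *; lra.
exists d0; apply: hpos => //.
have [k7|nk7] := boolP (6 < k)%N; first by apply/orP; left.
have k6e : 6%N = k by apply/eqP; rewrite eqn_leq k6 leqNgt nk7.
apply/orP; right.
have j3 : j = 3%N by move: jk jk2; rewrite -k6e; apply: arith3.
rewrite j3 in hj.
have e5 : h 5%N = a by rewrite -hk1 -k6e.
have e6 : h 6%N = v by rewrite -hk -k6e.
have r4 := Hrec 4%N; have r3 := Hrec 3%N; have r2 := Hrec 2%N; have r1 := Hrec 1%N; have r0 := Hrec 0%N.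
rewrite e6 e5 in r4; rewrite e5 hj in r3; rewrite hj in r2; rewrite hj h1 in r1; rewrite h1 h0 in r0.
have ebc := Hedge 1%N; have ecv := Hedge 2%N; have evg := Hedge 3%N; have ega := Hedge 4%N.
rewrite h1 in ebc; rewrite hj in ecv evg; rewrite e5 in ega.
set c := h 2%N in r0 r1 r2 ebc ecv.
set g := h 4%N in r2 r3 r4 evg ega.
have cv : c != v by rewrite -h0; apply: Hnb.
have nCc : ~~ C c.
  apply/negP => Cc; move/negP: nCb; apply; apply: connect_trans Cc _; apply: connect1.
  by rewrite /G /del_vertex /= esy ebc cv bv.
have Cg : C g.
  apply: connect_trans Ca _; apply: connect1.
  rewrite /G /del_vertex /= esy ega av /=; rewrite eq_sym; apply: eneq evg.
have evc : e v c by rewrite esy.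
have rvb : rho v b = c.
  have fac : fconnect (rho v) a c by apply: (hrot v).2.
  have ml : (findex (rho v) a c < 4)%N by rewrite -(reg v) -(rorder eva); apply: findex_max.
  have := iter_findex fac; move: ml; case: (findex (rho v) a c) => [|[|[|[|m]]]] //= _.
  - by move=> E; rewrite -E Ca in nCc.
  - by move=> E; move: ebc; rewrite /b E eirr.
  - move=> E; have := rot4 eva (reg v); rewrite /= E -r2 => E2.
    by move: ega; rewrite E2 eirr.
have rvg : rho v g = a by rewrite r2 -rvb; apply: rot4 eva (reg v).
apply/andP; split.
  apply/negP; rewrite /Tn /tri /rv /= => /eqP t.
  have [t1 t2] := tri_rot t.
  have : rho a v = g by apply: (perm_inj (s:=rho v)); rewrite t2 rvg.
  move=> E; apply: (no2cyc (x:=a) (a:=v) (b:=g)) => //.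
apply/negP; rewrite /Tn /tri /rv /= => /eqP t.
have [t1 t2] := tri_rot t.
rewrite -/b rvb in t2.
apply: (no2cyc (x:=b) (a:=v) (b:=c)) => //.
by rewrite esy; apply: rnb.
Qed.
Lemma main_sec (x0 : T) (conn : connected_graph e) (tor : (0 <= euler_rot e rho)%R) :
  (forall x, deg e x = 4%N) /\ two_connected e.
Proof.
have reg := regular4 x0 tor.
split => //; split.
  have : (#|nbhd e x0| < #|T|)%N.
    rewrite -cardsT; apply: proper_card; rewrite properT; apply/negP => /eqP E.
    by have := in_setT x0; rewrite -E /nbhd inE eirr.
  by rewrite -/(deg e x0) reg => /(leq_trans _); apply.
move=> v x y xv yv; apply/idPn => nxy.
have := euler_lt0 x0 (cut_pos reg conn xv yv nxy).
by rewrite ltNge tor.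
Qed.

Lemma not_planar_sec (x0 : T) : euler_rot e rho != Posz 2.
Proof. by apply/eqP => E; have := euler_le0 x0; rewrite E. Qed.

End Rot.

Theorem theorem1p2 (T : finType) (e : rel T) :
  simple_graph e -> 0 < #|T| -> connected_graph e -> toroidal e ->
  ~ has_subgraph C1 e -> ~ has_subgraph C2 e ->
  (exists x : T, deg e x <= 3) \/
  (two_connected e /\ regular e 4 /\ euler_char_zero e).
Proof.
move=> [esy eirr] T0 conn tor nC1 nC2.
have [x0 _] := card_gt0P T0.
case: (boolP [exists x, deg e x <= 3]) => [/existsP [x hx] | /existsPn hall].
  by left; exists x.
right.
have hdeg : forall x, 3 < deg e x by move=> x; rewrite ltnNge hall.
have [rho [hrot he]] := tor.
have [reg tc] := main_sec esy eirr hrot hdeg nC1 nC2 x0 conn he.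
split => //; split => //; split => //.
move=> [rho' [hrot' he2]].
by have := not_planar_sec esy eirr hrot' hdeg nC1 nC2 x0; rewrite he2.
Qed.
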